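(* Define $I\colon C(X\times Y)\to C(X)$ by $(I\psi)(x)=\int_Y\psi(x,y)\,d\nu_x(y)$ and $I^*\colon\mathcal M(X)\to\mathcal M(X\times Y)$ by $I^*\eta=\int_X\nu_x\,d\eta(x)$ (i.e. $\int\psi\,d(I^*\eta)=\int_X\int_Y\psi(x,y)\,d\nu_x(y)\,d\eta(x)$). Then $$I\circ\mathcal L_\varphi=\mathcal L_\Phi\circ I\qquad\text{and}\qquad I^*\circ\mathcal L_\Phi^*=\mathcal L_\varphi^*\circ I^*.$$
   Context: Standing setting. $X$ and $Y$ are compact connected Riemannian manifolds, $X\times Y$ has the metric $d((x,y),(x',y'))=d_X(x,x')+d_Y(y,y')$. $F(x,y)=(f(x),g_x(y))$ is a skew product which is a Lipschitz local homeomorphism; $Y_x=\{x\}\times Y$ is identified with $Y$. $f$ is uniformly expanding with expansion constant $\gamma>1$. Every $y$ has exactly $d$ preimages under each $g_x$. There is a continuous function $L(\cdot,\cdot)$ such that each $z$ has a neighbourhood $U_z$ on which $F$ is injective and the inverse of $F|_{U_z}$ is $L(z)$-Lipschitz on $F(U_z)$. There are $L\ge1$ and open $\mathcal A\subset X\times Y$ with: (A1) $L(z)\le L$ on $\mathcal A$ and $L(z)<\gamma^{-1}$ off $\mathcal A$; (A2) a finite cover $\mathcal U$ of $X\times Y$ by open sets on which $F$ is injective, with $\mathcal A$ covered by $q<d$ elements of $\mathcal U$ and each element of $\mathcal U$ meeting at most one curve of $F^{-1}(c)$ for every distance-minimizing geodesic $c$. The potential $\varphi$ is $\alpha$-Hölder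 ($0<\alpha<1$) satisfying (P): $\sup\varphi-\inf\varphi<\varepsilon_\varphi$ and $|e^\varphi|_\alpha<\varepsilon_\varphi e^{\inf\varphi}$, where $\varepsilon_\varphi>0$ satisfies $s:=e^{\varepsilon_\varphi}\frac{(d-q)\gamma^{-\alpha}+qL^\alpha}{d}<1$ and $s+2s\varepsilon_\varphi\,\mathrm{diam}(Y)^\alpha<1$. Operators: $\mathcal L_\varphi\psi(z)=\sum_{\bar z\in F^{-1}z}e^{\varphi(\bar z)}\psi(\bar z)$ on $C(X\times Y)$; fiberwise $\mathcal L_x\psi(y)=\sum_{\bar y\in g_x^{-1}(y)}e^{\varphi(x,\bar y)}\psi(\bar y)$ from $C(Y_x)$ to $C(Y_{fx})$, $\mathcal L_x^n=\mathcal L_{f^{n-1}x}\circ\cdots\circ\mathcal L_x$, $\mathcal L_x^*$ dual. $\Phi(x)=\lim_{n\to\infty}\log\frac{\langle\mathcal L_x^{n+1}\mathbb 1,\sigma\rangle}{\langle\mathcal L_{fx}^n\mathbb 1,\sigma\rangle}$ for any Borel probability $\sigma$ on $Y$ (exists, independent of $\sigma$); $\mathcal L_\Phi\xi(x)=\sum_{\bar x\in f^{-1}x}e^{\Phi(\bar x)}\xi(\bar x)$ on $C(X)$; stars denote dual operators on measures. $\{\nu_x\}_{x\in X}$ is the unique family of Borel probability measures on $Y_x$ with $\mathcal L_x^*\nu_{fx}=e^{\Phi(x)}\nu_x$ for all $x$; $x\mapsto\int\psi(x,y)d\nu_x(y)$ is continuous for $\psi\in C(X\times Y)$. *)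

(* Defs.v *)
From HB Require Import structures.
From mathcomp Require Import all_boot all_order all_algebra.
From mathcomp Require Import all_classical all_reals all_analysis.
Set Implicit Arguments. Unset Strict Implicit. Unset Printing Implicit Defensive.
Import Order.TTheory GRing.Theory Num.Theory.
Import numFieldNormedType.Exports.
Local Open Scope classical_set_scope.
Local Open Scope ring_scope.

Definition borelT (T : ptopologicalType) := g_sigma_algebraType (@open T).

Section Defs.
Variable R : realType.

Definition is_metric_fn (T : Type) (d : T -> T -> R) : Prop :=
  [/\ (forall x y, d x y = 0 <-> x = y),
      (forall x y, d x y = d y x) &
      (forall x y z, d x z <= d x y + d y z)].

Definition metrizes_top (T : topologicalType) (d : T -> T -> R) : Prop :=
  forall A : set T, open A <->
    (forall x, A x -> exists e : R, 0 < e /\ [set y | d x y < e] `<=` A).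

Definition dsum_prod (X Y : Type) (dX : X -> X -> R) (dY : Y -> Y -> R)
  (z w : X * Y) : R := dX z.1 w.1 + dY z.2 w.2.

(* Riemannian (l^2) product distance, used only to speak about geodesics *)
Definition dl2_prod (X Y : Type) (dX : X -> X -> R) (dY : Y -> Y -> R)
  (z w : X * Y) : R := Num.sqrt (dX z.1 w.1 ^+ 2 + dY z.2 w.2 ^+ 2).

Definition skew_map (X Y : Type) (f : X -> X) (g : X -> Y -> Y) (z : X * Y) : X * Y :=
  (f z.1, g z.1 z.2).

Definition inj_on_set (S T : Type) (F : S -> T) (U : set S) : Prop :=
  forall z w, U z -> U w -> F z = F w -> z = w.

Definition is_local_inverse (S T : Type) (F : S -> T) (U : set S) (G : T -> S) :=
  (forall w, U w -> G (F w) = w) /\ (forall v, (F @` U) v -> U (G v) /\ F (G v) = v).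

Definition lip_on (S T : Type) (dS : S -> S -> R) (dT : T -> T -> R)
  (K : R) (A : set S) (h : S -> T) : Prop :=
  forall z w, A z -> A w -> dT (h z) (h w) <= K * dS z w.

Definition local_homeo_map (S T : topologicalType) (F : S -> T) : Prop :=
  forall z, exists U : set S, [/\ open U, U z, inj_on_set F U, open (F @` U) &
    exists G, is_local_inverse F U G /\ {within F @` U, continuous G}].

Definition unif_exp (X : Type) (dX : X -> X -> R) (f : X -> X) (gam : R) :=
  exists delta : R, 0 < delta /\
    forall x x', dX x x' < delta -> gam * dX x x' <= dX (f x) (f x').

Definition min_geod (T : Type) (d : T -> T -> R) (c : R -> T) : Prop :=
  forall s t, 0 <= s <= 1 -> 0 <= t <= 1 -> d (c s) (c t) = `|s - t| * d (c 0) (c 1).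

(* a curve of F^{-1}(c): a continuous lift of c through F *)
Definition lift_curve (T : topologicalType) (F : T -> T) (c ct : R -> T) : Prop :=
  {within `[0, 1], continuous ct} /\ forall t, 0 <= t <= 1 -> F (ct t) = c t.

Definition holder_fn (T : Type) (d : T -> T -> R) (alpha : R) (h : T -> R) : Prop :=
  exists K : R, forall z w, `|h z - h w| <= K * (d z w) `^ alpha.

(* |h|_alpha < c, where |h|_alpha = sup_{z<>w} |h z - h w| / d(z,w)^alpha *)
Definition hseminorm_lt (T : Type) (d : T -> T -> R) (alpha : R) (h : T -> R)
  (c : R) : Prop :=
  exists K : R, K < c /\ forall z w, z <> w -> `|h z - h w| <= K * (d z w) `^ alpha.

Definition mdiam (T : Type) (d : T -> T -> R) : R :=
  sup [set d y y' | y in setT & y' in setT].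

Definition transfer_op (S : choiceType) (phi : S -> R) (F : S -> S) (psi : S -> R)
  (z : S) : R :=
  \sum_(zb \in [set zb | F zb = z]) expR (phi zb) * psi zb.

Definition fib_op (X Y : choiceType) (phi : X * Y -> R) (g : X -> Y -> Y) (x : X)
  (psi : Y -> R) : Y -> R :=
  fun y => \sum_(yb \in [set yb | g x yb = y]) expR (phi (x, yb)) * psi yb.

Fixpoint fib_iter (X Y : choiceType) (phi : X * Y -> R) (f : X -> X)
  (g : X -> Y -> Y) (n : nat) (x : X) (psi : Y -> R) : Y -> R :=
  match n with
  | 0 => psi
  | n'.+1 => fib_op phi g (iter n' f x) (fib_iter phi f g n' x psi)
  end.

Definition Iop (X Y : ptopologicalType) (nu : X -> probability (borelT Y) R)
  (psi : X * Y -> R) (x : X) : R :=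
  Rintegral (nu x) setT (fun y : borelT Y => psi (x, y)).

End Defs.

(* Main.v *)
Require Import Defs.
From HB Require Import structures.
From mathcomp Require Import all_boot all_order all_algebra.
From mathcomp Require Import all_classical all_reals all_analysis.
From mathcomp Require Import finmap.
Import Order.TTheory GRing.Theory Num.Theory.
Import numFieldNormedType.Exports.
Local Open Scope classical_set_scope.
Local Open Scope ring_scope.
Set Implicit Arguments. Unset Strict Implicit.


Lemma md_ge0 (R : realType) (T : Type) (dd : T -> T -> R) :
  is_metric_fn dd -> forall x y, 0 <= dd x y.
Proof.
move=> [h0 hs ht] x y.
have := ht x y x; rewrite (proj2 (h0 x x) erefl) hs.
by move=> h; rewrite -(@pmulr_rge0 _ 2)// mulr2n mulrDl mul1r.
Qed.

Lemma md_xx (R : realType) (T : Type) (dd : T -> T -> R) :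
  is_metric_fn dd -> forall x, dd x x = 0.
Proof. by move=> [h0 _ _] x; apply/h0. Qed.

Lemma md_ball_open (R : realType) (T : topologicalType) (dd : T -> T -> R) :
  is_metric_fn dd -> metrizes_top dd -> forall c r, open [set y | dd c y < r].
Proof.
move=> hm ht c r; apply/ht => y /= hy; exists (r - dd c y); split.
  by rewrite subr_gt0.
move=> z /= hz; case: hm => _ _ htr.
by apply: (le_lt_trans (htr c y z)); rewrite -ltrBrDl.
Qed.

Lemma md_nbhsP (R : realType) (T : topologicalType) (dd : T -> T -> R) :
  is_metric_fn dd -> metrizes_top dd -> forall x (A : set T),
  nbhs x A <-> exists e : R, 0 < e /\ [set y | dd x y < e] `<=` A.
Proof.
move=> hm ht x A; split.
  rewrite nbhsE => -[B [oB Bx] BA].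
  have [e [e0 eB]] := (proj1 (ht B) oB) x Bx.
  by exists e; split => // y /eB /BA.
move=> [e [e0 eA]]; rewrite nbhsE; exists [set y | dd x y < e] => //.
split; first exact: md_ball_open.
by rewrite /= md_xx.
Qed.

Lemma md_cvg (R : realType) (T : topologicalType) (dd : T -> T -> R) :
  is_metric_fn dd -> metrizes_top dd ->
  forall (S : Type) (F : set_system S) (FF : Filter F) (h : S -> T) x,
  h @ F --> x -> forall e : R, 0 < e -> \forall s \near F, dd x (h s) < e.
Proof.
move=> hm ht S F FF h x hx e e0.
apply: (hx [set y | dd x y < e]).
have := proj2 (md_nbhsP hm ht x [set y | dd x y < e]); apply.
by exists e; split.
Qed.

Lemma holder_cont (R : realType) (T : topologicalType) (dd : T -> T -> R)
  (alpha : R) (h : T -> R) :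
  is_metric_fn dd -> metrizes_top dd -> 0 < alpha ->
  (exists K : R, forall z w, `|h z - h w| <= K * (dd z w) `^ alpha) ->
  continuous h.
Proof.
move=> hm ht a0 [K hK] y0; apply/cvgrPdist_lt => e e0.
set K' := `|K| + 1.
have K'0 : 0 < K' by rewrite /K' ltr_pwDr// normr_ge0.
set r := (e / K') `^ (alpha^-1).
have r0 : 0 < r by rewrite powR_gt0// divr_gt0.
near=> y.
have hd : dd y0 y < r.
  near: y; apply: (md_cvg hm ht) => //; exact: cvg_id.
apply: (le_lt_trans (hK y0 y)).
have p0 : 0 <= dd y0 y `^ alpha by apply: powR_ge0.
apply: (le_lt_trans (y := K' * dd y0 y `^ alpha)).
  apply: ler_wpM2r => //; rewrite /K'.
  by apply: (le_trans (ler_norm K)); rewrite lerDl.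
have : dd y0 y `^ alpha < r `^ alpha.
  apply: gt0_ltr_powR => //; rewrite nnegrE ?(md_ge0 hm)// ltW//.
rewrite /r -powRrM mulVf ?gt_eqF// powRr1; last by rewrite ltW// divr_gt0.
by rewrite -(ltr_pM2l K'0) mulrCA mulfV ?gt_eqF// mulr1.
Unshelve. all: by end_near.
Qed.


Lemma subsingleton_finite (T : Type) (S : set T) :
  (forall a b, S a -> S b -> a = b) -> finite_set S.
Proof.
move=> hS; have [[a Sa]|nS] := pselect (exists a, S a).
  apply: (@sub_finite_set _ _ [set a]); last exact: finite_set1.
  by move=> b Sb; rewrite /= (hS _ _ Sb Sa).
suff -> : S = set0 by exact: finite_set0.
by apply/seteqP; split => // b Sb; exfalso; apply: nS; exists b.
Qed.

Lemma exp_sep (R : realType) (X : Type) (dX : X -> X -> R) (f : X -> X) (gam : R) :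
  is_metric_fn dX -> 0 < gam -> unif_exp dX f gam ->
  exists delta : R, 0 < delta /\ forall a b, f a = f b -> dX a b < delta -> a = b.
Proof.
move=> hm g0 [delta [d0 hd]]; exists delta; split => // a b fab ab.
have := hd _ _ ab; rewrite fab (md_xx hm) => h.
have : dX a b = 0.
  apply/eqP; rewrite eq_le (md_ge0 hm) andbT.
  by rewrite -(pmulr_rle0 _ g0).
by case: hm => h0 _ _ /h0.
Qed.

Lemma fiber_finite (R : realType) (X : ptopologicalType) (dX : X -> X -> R)
  (f : X -> X) (delta : R) :
  is_metric_fn dX -> metrizes_top dX -> compact [set: X] -> 0 < delta ->
  (forall a b, f a = f b -> dX a b < delta -> a = b) ->
  forall x, finite_set [set x' | f x' = x].
Proof.
move=> hm ht cX d0 hsep x.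
move: cX; rewrite compact_cover => /(_ X setT (fun c => [set y | dX c y < delta / 2])) cX.
have [DD _ hcov] : finite_subset_cover (I:=X) [set: X] (U:=X)
    (fun c : X => [set y | dX c y < delta / 2]) [set: X].
  apply: cX; first by move=> c _; exact: md_ball_open.
  by move=> y _; exists y => //=; rewrite md_xx// divr_gt0.
pose B : set X := [set` DD].
have -> : [set x' | f x' = x] =
   \bigcup_(c in B) ([set x' | f x' = x] `&` [set y | dX c y < delta / 2]).
  apply/seteqP; split => [y fy|y [c _ [fy _]]//].
  by have [c Dc cy] := hcov y I; exists c => //.
apply: bigcup_finite; first exact: finite_fset.
move=> c _; apply: subsingleton_finite => a b [fa ca] [fb cb].
apply: hsep; first by rewrite fa fb.
case: hm => h0 hs htr.
apply: (le_lt_trans (htr a c b)); rewrite hs.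
by rewrite [delta](splitr delta) ltrD.
Qed.


Lemma transfer_decomp (R : realType) (X Y : choiceType) (phi : X * Y -> R)
  (f : X -> X) (g : X -> Y -> Y) (psi : X * Y -> R) x y :
  finite_set [set x' | f x' = x] -> (forall x', finite_set [set yb | g x' yb = y]) ->
  transfer_op phi (skew_map f g) psi (x, y) =
  \sum_(x' \in [set x' | f x' = x]) fib_op phi g x' (fun yb => psi (x', yb)) y.
Proof.
move=> Pfin Qfin.
pose P := [set x' | f x' = x].
pose Qa := \bigcup_(x' in P) [set yb | g x' yb = y].
have Qafin : finite_set Qa by apply: bigcup_finite.
pose G (p : X * Y) := if g p.1 p.2 == y then expR (phi p) * psi p else 0.
transitivity (\sum_(p \in P `*` Qa) G p).
  rewrite /transfer_op.
  transitivity (\sum_(zb \in [set zb | skew_map f g zb = (x, y)]) G zb).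
    apply: eq_fsbigr => -[a b] /set_mem; rewrite /= /skew_map /= => -[_ gab].
    by rewrite /G /= gab eqxx.
  apply: fsbig_widen.
    move=> [a b] /= [fa gb]; split => //=; exists a => //.
  move=> [a b] [[/= fa [a' fa' gb]]] /=; rewrite /skew_map /= => hn.
  rewrite /G /=; case: eqP => // gab; exfalso; apply: hn; rewrite gab; have -> : f a = x := fa; done.
transitivity (\sum_(x' \in P) \sum_(yb \in Qa) G (x', yb)).
  by rewrite pair_fsbig//; apply: eq_fsbigr => -[].
apply: eq_fsbigr => x' /set_mem Px'; rewrite /fib_op.
rewrite -(@fsbig_widen _ _ _ _ [set yb | g x' yb = y] Qa).
- by apply: eq_fsbigr => yb /set_mem /= gy; rewrite /G /= gy eqxx.
- move=> yb gy. by exists x'.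
- by move=> yb [_ /= gn]; rewrite /G /=; case: eqP.
Qed.


Lemma cont_measurable (R : realType) (Y : ptopologicalType) (h : borelT Y -> R) :
  continuous (h : Y -> R) -> measurable_fun setT h.
Proof.
move=> hc; apply: (measurability _ (measurable_realfun.RGenOpens.measurableE R)).
move=> _ [_ [a [b ->]] <-]; rewrite setTI.
apply: sub_sigma_algebra.
move/continuousP: hc; apply; exact: interval_open.
Qed.

Lemma cont_bounded (R : realType) (Y : ptopologicalType) (h : Y -> R) :
  compact [set: Y] -> continuous h -> [bounded h x | x in [set: Y]].
Proof.
move=> cY hc.
have : compact (h @` [set: Y]).
  by apply: continuous_compact => //; exact: continuous_subspaceT.
move/compact_bounded => [M [Mr HM]].
exists M; split => // N MN y _; apply: (HM N MN); by exists y.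
Qed.

Lemma cont_integrable (R : realType) (Y : ptopologicalType)
  (mu : probability (borelT Y) R) (h : Y -> R) :
  compact [set: Y] -> continuous h -> mu.-integrable setT (EFin \o h).
Proof.
move=> cY hc; apply: measurable_bounded_integrable => //.
- have h1 := probability_setT mu.
  exact: (eq_ind_r (fun t => (t < +oo)%E) (ltry 1) h1).
- exact: cont_measurable.
- exact: cont_bounded.
Qed.

Lemma Rintegral_fsum (R : realType) (Y : ptopologicalType) (X : choiceType)
  (mu : probability (borelT Y) R) (P : set X) (h : X -> Y -> R) :
  finite_set P -> (forall i, P i -> mu.-integrable setT (EFin \o h i)) ->
  Rintegral mu setT (fun y => \sum_(i \in P) h i y) =
  \sum_(i \in P) Rintegral mu setT (h i).
Proof.
move=> Pfin hi.
rewrite fsbig_finite//.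
under eq_Rintegral do rewrite fsbig_finite//.
have hP : forall i, i \in (fset_set P : seq X) -> P i.
  by move=> i; rewrite in_fset_set// => /set_mem.
move: hP; elim: (fset_set P : seq X) => [|a s ih] hs.
  under eq_Rintegral do rewrite big_nil.
  by rewrite big_nil Rintegral_cst// mul0r.
have ih' := ih (fun i si => hs i (mem_behead (s:=a :: s) si)).
have intS : mu.-integrable setT (EFin \o (fun y => \sum_(i <- s) h i y)).
  have -> : EFin \o (fun y => \sum_(i <- s) h i y) =
            (fun y => (\sum_(i <- s) (EFin \o h i) y)%E).
    by apply/funext => y /=; rewrite -sumEFin.
  have := @integrable_sum _ _ _ mu setT measurableT _ s (fun i => i \in s)
     (fun i => EFin \o h i) (fun i si => hi i (hs i (mem_behead (s:=a :: s) si))).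
  by apply: eq_integrable => // y _; rewrite -big_seq.
under eq_Rintegral do rewrite big_cons.
rewrite RintegralD// ?big_cons ?ih'//.
by apply: hi; apply: hs; rewrite inE eqxx.
Qed.


Lemma pair_cont (X Y : topologicalType) (x0 : X) : continuous (fun y : Y => (x0, y)).
Proof. move=> y; apply: cvg_pair; [exact: cvg_cst | exact: cvg_id]. Qed.

Lemma fst_cont (X Y : topologicalType) : continuous (fun z : X * Y => z.1).
Proof. move=> z; exact: cvg_fst. Qed.

Lemma snd_cont (X Y : topologicalType) : continuous (fun z : X * Y => z.2).
Proof. move=> z; exact: cvg_snd. Qed.

Lemma sub_card_eq (T : choiceType) (A B : set T) n :
  A `<=` B -> (A #= `I_n)%card -> (B #= `I_n)%card -> A = B.
Proof.
move=> AB An Bn.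
have fA : finite_set A by exists n.
have fB : finite_set B by exists n.
rewrite -(fset_setK fA) -(fset_setK fB).
suff -> : fset_set A = fset_set B by [].
apply/eqP; rewrite eqEfcard; apply/andP; split.
  by rewrite -fset_set_sub.
by rewrite (card_fset_set An) (card_fset_set Bn).
Qed.

Lemma cvg_sumn (R : realType) (Y : topologicalType) (y0 : Y) (d : nat)
  (T : nat -> Y -> R) :
  (forall n, (n < d)%N -> T n y @[y --> y0] --> T n y0) ->
  (\sum_(n < d) T n y) @[y --> y0] --> \sum_(n < d) T n y0.
Proof.
move=> hT.
have -> : (fun y => \sum_(n < d) T n y) = (fun y => \sum_(0 <= n < d) T n y).
  by apply/funext => y; rewrite big_mkord.
have -> : \sum_(n < d) T n y0 = \sum_(0 <= n < d) T n y0 by rewrite big_mkord.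
elim: d hT => [|d ih] hT.
  under eq_fun do rewrite big_nil.
  rewrite big_nil; exact: cvg_cst.
under eq_fun do rewrite big_nat_recr//.
rewrite big_nat_recr//.
apply: cvgD.
  by apply: ih => n nd; apply: hT; apply: ltn_trans nd _.
exact: hT.
Qed.


Lemma fib_cont (R : realType) (X Y : ptopologicalType)
  (dX : X -> X -> R) (dY : Y -> Y -> R) (f : X -> X) (g : X -> Y -> Y)
  (d : nat) (delta : R) (Hf : Y -> R) (x0 : X) :
  is_metric_fn dX -> metrizes_top dX -> is_metric_fn dY -> metrizes_top dY ->
  0 < delta -> (forall a b, f a = f b -> dX a b < delta -> a = b) ->
  (forall x y, ([set yb | g x yb = y] #= `I_d)%card) ->
  local_homeo_map (skew_map f g) -> continuous Hf ->
  continuous (fun y => \sum_(yb \in [set yb | g x0 yb = y]) Hf yb).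
Proof.
move=> hmX htX hmY htY d0 hsep hcard hloc hHf y0.
pose Q0 := [set yb | g x0 yb = y0].
have := card_esym (hcard x0 y0); move/pcard_eqP => [b].
have bS := 'funS_b; have bI := 'inj_b.
have [UG hUG] := choice (fun n => hloc (x0, b n)).
have [GG hGG] := choice (fun n => let: And5 _ _ _ _ e := hUG n in e).
pose lift n y := (GG n (f x0, y)).2.
have key : forall n, (n < d)%N ->
  [/\ lift n y0 = b n, {for y0, continuous (lift n)} &
      \forall y \near y0, g x0 (lift n y) = y].
  move=> n nd.
  have [oU Ub _ oFU _] := hUG n.
  have [[linv1 linv2] cG] := hGG n.
  have Fb : skew_map f g (x0, b n) = (f x0, y0).
    by rewrite /skew_map /=; have := bS n nd; rewrite /Q0 /= => ->.
  have FUv : (skew_map f g @` UG n) (f x0, y0) by exists (x0, b n).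
  have G0 : GG n (f x0, y0) = (x0, b n) by rewrite -Fb linv1.
  have cG0 : {for (f x0, y0), continuous (GG n)}.
    by move: cG; rewrite continuous_open_subspace// => /(_ _ (mem_set FUv)).
  have cGy : {for y0, continuous (fun y => GG n (f x0, y))}.
    apply: continuous_comp; first exact: pair_cont.
    exact: cG0.
  have E1 : \forall y \near y0, (skew_map f g @` UG n) (f x0, y).
    have : nbhs (f x0, y0) (skew_map f g @` UG n).
      by rewrite nbhsE; exists (skew_map f g @` UG n).
    move=> hn; exact: (@pair_cont X Y (f x0) y0 _ hn).
  have E3 : \forall y \near y0, dX x0 (GG n (f x0, y)).1 < delta.
    suff c1 : (fun y => (GG n (f x0, y)).1) @ y0 --> x0.
      exact: (md_cvg hmX htX _ c1 d0).
    have : {for y0, continuous ((fun z : X * Y => z.1) \o (fun y => GG n (f x0, y)))}.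
      by apply: continuous_comp; [exact: cGy | exact: fst_cont].
    move=> h; have e : (GG n (f x0, y0)).1 = x0 by rewrite G0.
    by rewrite -[X in _ --> X]e; exact: h.
  split.
  - by rewrite /lift G0.
  - have : {for y0, continuous ((fun z : X * Y => z.2) \o (fun y => GG n (f x0, y)))}.
      by apply: continuous_comp; [exact: cGy | exact: snd_cont].
    by [].
  apply: (filterS2 _ _ E1 E3) => y h1 e3.
  have [Uv Fv] := linv2 _ h1.
  move: Fv; rewrite /skew_map => -[fe ge].
  have ex : x0 = (GG n (f x0, y)).1 by apply: hsep => //; rewrite fe.
  by rewrite /lift {1}ex.
have dist : forall n m, (n < d)%N -> (m < d)%N -> n != m ->
    \forall y \near y0, lift n y != lift m y.
  move=> n m nd md nm.
  have [l0n cn _] := key n nd; have [l0m cm _] := key m md.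
  have bnm : b n != b m.
    apply/eqP => /bI h; move/eqP: nm; apply; apply: h; exact: mem_set.
  have dpos : 0 < dY (b n) (b m).
    rewrite lt_neqAle (md_ge0 hmY) andbT; apply/eqP => h0.
    by move/eqP: bnm; apply; case: hmY => hh _ _; apply/hh.
  pose e := dY (b n) (b m) / 2.
  have e0 : 0 < e by rewrite divr_gt0.
  have cn' : lift n y @[y --> y0] --> b n by rewrite -l0n; exact: cn.
  have cm' : lift m y @[y --> y0] --> b m by rewrite -l0m; exact: cm.
  have En : \forall y \near y0, dY (b n) (lift n y) < e.
    exact: (md_cvg hmY htY _ cn' e0).
  have Em : \forall y \near y0, dY (b m) (lift m y) < e.
    exact: (md_cvg hmY htY _ cm' e0).
  move: En Em; apply: filterS2 => y hn hm; apply/eqP => eq.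
  case: hmY => _ hs htr.
  have := htr (b n) (lift n y) (b m); rewrite eq (hs (lift m y) (b m)).
  have : dY (b n) (lift m y) + dY (b m) (lift m y) < e + e.
    by rewrite ltrD// -eq.
  rewrite -splitr => h1 h2.
  by move: (le_lt_trans h2 h1); rewrite ltxx.
have all1 : \forall y \near y0, forall i : 'I_d, g x0 (lift i y) = y.
  apply: filter_forall => i.
  by have [_ _ h] := key i (ltn_ord i).
have all2 : \forall y \near y0, forall ij : 'I_d * 'I_d,
    (ij.1 : nat) != ij.2 -> lift ij.1 y != lift ij.2 y.
  apply: filter_forall => -[i j] /=.
  have [ij|ij] := eqVneq (i : nat) j.
    by apply: nearW => y; rewrite ij eqxx.
  by apply: filterS (dist _ _ (ltn_ord i) (ltn_ord j) ij) => y h _.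
have Heq : \forall y \near y0,
    \sum_(n < d) Hf (lift n y) = \sum_(yb \in [set yb | g x0 yb = y]) Hf yb.
  apply: (@filterS2 _ (nbhs y0) _ _ _ _ _ all1 all2) => y h1 h2.
  have sub : [set lift n y | n in `I_d] `<=` [set yb | g x0 yb = y].
    by move=> _ [n nd <-]; exact: (h1 (Ordinal nd)).
  have inj : {in `I_d &, injective (lift^~ y)}.
    move=> n m /set_mem nd /set_mem md e; apply/eqP; apply: contraT => nm.
    by have := h2 (Ordinal nd, Ordinal md) nm; rewrite /= e eqxx.
  have E := sub_card_eq sub (inj_card_eq inj) (hcard x0 y).
  by rewrite -E fsbig_image// -fsbig_ord.
have ck : (\sum_(n < d) Hf (lift n y)) @[y --> y0] --> \sum_(n < d) Hf (lift n y0).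
  apply: (@cvg_sumn _ _ y0 d (fun n y => Hf (lift n y))) => n nd; have [_ cn _] := key n nd.
  exact: (continuous_comp cn (hHf _)).
rewrite /continuous_at -(nbhs_singleton Heq).
exact: (cvg_trans (near_eq_cvg Heq) ck).
Qed.

Unset Implicit Arguments. Set Strict Implicit.


Theorem theorem4p4 (R : realType) (X Y : ptopologicalType)
  (dX : X -> X -> R) (dY : Y -> Y -> R)
  (f : X -> X) (g : X -> Y -> Y) (gam : R) (d : nat)
  (Lfun : X * Y -> R) (L : R) (A : set (X * Y))
  (N : nat) (U : nat -> set (X * Y)) (q : nat)
  (alpha : R) (phi : X * Y -> R) (eps : R)
  (Phi : X -> R) (nu : X -> probability (borelT Y) R) :
  (* X, Y compact connected metric spaces *)
  is_metric_fn dX -> metrizes_top dX -> compact [set: X] -> connected [set: X] ->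
  is_metric_fn dY -> metrizes_top dY -> compact [set: Y] -> connected [set: Y] ->
  (* F = skew_map f g is a Lipschitz local homeomorphism for d = dX + dY *)
  (exists K : R, lip_on (dsum_prod dX dY) (dsum_prod dX dY) K setT (skew_map f g)) ->
  local_homeo_map (skew_map f g) ->
  (* f uniformly expanding with constant gam > 1 *)
  1 < gam -> unif_exp dX f gam ->
  (* every y has exactly d preimages under each g_x *)
  (forall x y, ([set yb | g x yb = y] #= `I_d)%card) ->
  (* the continuous function L(.) *)
  continuous Lfun ->
  (forall z, exists Uz : set (X * Y),
     [/\ open Uz, Uz z, inj_on_set (skew_map f g) Uz &
       exists G, is_local_inverse (skew_map f g) Uz G /\
         lip_on (dsum_prod dX dY) (dsum_prod dX dY) (Lfun z) (skew_map f g @` Uz) G]) ->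
  (* (A1) *)
  1 <= L -> open A ->
  (forall z, A z -> Lfun z <= L) ->
  (forall z, ~ A z -> Lfun z < gam^-1) ->
  (* (A2) *)
  (forall i, (i < N)%N -> open (U i) /\ inj_on_set (skew_map f g) (U i)) ->
  (forall z, exists2 i, (i < N)%N & U i z) ->
  (exists J : seq nat, [/\ uniq J, size J = q, all (fun i => i < N)%N J &
       A `<=` \bigcup_(i in [set i | i \in J]) U i]) ->
  (q < d)%N ->
  (forall i, (i < N)%N -> forall c : R -> X * Y, min_geod (dl2_prod dX dY) c ->
     forall c1 c2, lift_curve (skew_map f g) c c1 -> lift_curve (skew_map f g) c c2 ->
       (exists t, 0 <= t <= 1 /\ U i (c1 t)) ->
       (exists t, 0 <= t <= 1 /\ U i (c2 t)) ->
       forall t, 0 <= t <= 1 -> c1 t = c2 t) ->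
  (* (P) *)
  0 < alpha < 1 -> holder_fn (dsum_prod dX dY) alpha phi ->
  0 < eps ->
  sup (range phi) - inf (range phi) < eps ->
  hseminorm_lt (dsum_prod dX dY) alpha (fun z => expR (phi z))
    (eps * expR (inf (range phi))) ->
  (let s := expR eps * (((d - q)%N%:R * gam `^ (- alpha) + q%:R * L `^ alpha)
                         / d%:R) in
   s < 1 /\ s + 2 * s * eps * (mdiam dY) `^ alpha < 1) ->
  (* Phi *)
  (forall (x : X) (sigma : probability (borelT Y) R),
     (fun n : nat => ln (Rintegral sigma setT (fib_iter phi f g n.+1 x (cst 1))
                      / Rintegral sigma setT (fib_iter phi f g n (f x) (cst 1))))
       @ \oo --> Phi x) ->
  (* the family nu_x: L_x^* nu_{fx} = e^{Phi x} nu_x, tested on C(Y) *)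
  (forall (x : X) (psi : Y -> R), continuous psi ->
     Rintegral (nu (f x)) setT (fib_op phi g x psi)
     = expR (Phi x) * Rintegral (nu x) setT psi) ->
  (forall psi : X * Y -> R, continuous psi -> continuous (Iop nu psi)) ->
  (* conclusion *)
  (forall psi : X * Y -> R, continuous psi ->
     Iop nu (transfer_op phi (skew_map f g) psi) = transfer_op Phi f (Iop nu psi)) /\
  (forall (eta : {finite_measure set (borelT X) -> \bar R}) (psi : X * Y -> R),
     continuous psi ->
     (\int[eta]_x (Iop nu (transfer_op phi (skew_map f g) psi) x)%:E
      = \int[eta]_x (transfer_op Phi f (Iop nu psi) x)%:E)%E).
Proof.
move=> hmX htX cX _ hmY htY cY _ _ hloc gam1 hexp hcard _ _ _ _ _ _ _ _ _ _ _
  /andP[a0 _] [K hK] _ _ _ _ _ hnu _.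
have gam0 : 0 < gam by apply: lt_trans gam1.
have [delta [d0 hsep]] := exp_sep hmX gam0 hexp.
have Pfin := fiber_finite hmX htX cX d0 hsep.
have Qfin : forall x y, finite_set [set yb | g x yb = y] by move=> x y; exists d.
have part1 : forall psi : X * Y -> R, continuous psi ->
    Iop nu (transfer_op phi (skew_map f g) psi) = transfer_op Phi f (Iop nu psi).
  move=> psi hpsi; apply/funext => x.
  have hpsi' : forall x', continuous (fun y : Y => psi (x', y)).
    by move=> x' y; apply: continuous_comp; [exact: pair_cont | exact: hpsi].
  have hphi' : forall x', continuous (fun y : Y => phi (x', y)).
    move=> x'; apply: (holder_cont hmY htY a0); exists K => a b.
    by have := hK (x', a) (x', b); rewrite /dsum_prod /= md_xx// add0r.
  have hH : forall x', continuous (fun y : Y => expR (phi (x', y)) * psi (x', y)).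
    move=> x' y; apply: cvgM; last exact: hpsi'.
    by apply: continuous_comp; [exact: hphi' | exact: continuous_expR].
  have cfib : forall x', continuous (fib_op phi g x' (fun yb => psi (x', yb))).
    move=> x'; exact: (fib_cont hmX htX hmY htY d0 hsep hcard hloc (hH x')).
  rewrite /Iop.
  under eq_Rintegral do rewrite transfer_decomp//.
  rewrite Rintegral_fsum//; last first.
    by move=> x' _; apply: cont_integrable => //; exact: cfib.
  rewrite /transfer_op; apply: eq_fsbigr => x' /set_mem /= fx'.
  rewrite -fx' hnu//.
split => // eta psi hpsi.
by rewrite part1.
Qed.
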